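(* Let $G$ be a group, $H$ a finite index normal subgroup of $G$, $K$ a normal subgroup of $G$, and $g\in H$. If $\nu(g;G,K)$ is infinite, then $\nu(g;H,H\cap K)$ is infinite.
   Context: For a group $G$, a normal subgroup $K$ and $g\in G$, with $\psi:G\to G/K$ the quotient map: if $g\in K$, $\nu(g;G,K)$ is the supremum of $o(\psi(a),G/K)$ (order of $\psi(a)$) over all $a\in G$ such that $a^n=g$ for some integer $n$; if $g\notin K$, $\nu(g;G,K)$ is the supremum of all non-zero integers $n$ for which $g=a^n$ for some $a\in G$. $\nu(g;G,K)$ is infinite if the relevant set is unbounded. The same definition applies to $\nu(g;H,H\cap K)$ within the group $H$ and its normal subgroup $H\cap K$. *)

(* Defs.v *)
From Stdlib Require Import ZArith List.
Open Scope Z_scope.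

Record group := Group {
  carrier :> Type;
  mul : carrier -> carrier -> carrier;
  one : carrier;
  inv : carrier -> carrier;
  mulA : forall x y z, mul x (mul y z) = mul (mul x y) z;
  mul1g : forall x, mul one x = x;
  mulVg : forall x, mul (inv x) x = one
}.

Arguments mul {g}. Arguments one {g}. Arguments inv {g}.

Fixpoint npow {G : group} (a : G) (n : nat) : G :=
  match n with O => one | S m => mul a (npow a m) end.

Definition zpow {G : group} (a : G) (z : Z) : G :=
  match z with
  | Z0 => one
  | Zpos p => npow a (Pos.to_nat p)
  | Zneg p => inv (npow a (Pos.to_nat p))
  end.

Definition is_subgroup {G : group} (H : G -> Prop) : Prop :=
  H one /\ (forall x y, H x -> H y -> H (mul x y)) /\ (forall x, H x -> H (inv x)).

Definition is_normal {G : group} (H : G -> Prop) : Prop :=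
  is_subgroup H /\ forall x y, H x -> H (mul (inv y) (mul x y)).

(* finitely many left cosets r H cover G *)
Definition finite_index {G : group} (H : G -> Prop) : Prop :=
  is_subgroup H /\ exists l : list G, forall x, exists r, In r l /\ H (mul (inv r) x).

(* Order of the coset a N in the quotient S/N (a in S, N normal in S):
   [has_qorder N a n] : the order of aN is the positive integer n;
   [qorder_infinite N a] : aN has infinite order. *)
Definition has_qorder {G : group} (N : G -> Prop) (a : G) (n : nat) : Prop :=
  (0 < n)%nat /\ N (npow a n) /\ forall k, (0 < k < n)%nat -> ~ N (npow a k).

Definition qorder_infinite {G : group} (N : G -> Prop) (a : G) : Prop :=
  forall k, (0 < k)%nat -> ~ N (npow a k).

(* [nu_infinite S N g] : nu(g; S, N) is infinite, where S is the ambient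
   group (a subgroup of G, given by a predicate) and N a normal subgroup of S.
   - if g in N: the orders o(psi(a), S/N), over a in S with a^n = g for some
     integer n, have supremum infinity (some order infinite, or orders unbounded);
   - if g notin N: the nonzero integers n with g = a^n for some a in S are
     unbounded (above). *)
Definition nu_infinite {G : group} (S N : G -> Prop) (g : G) : Prop :=
  (N g ->
    forall M : nat, exists a, S a /\ (exists n : Z, zpow a n = g) /\
      (qorder_infinite N a \/ exists m, has_qorder N a m /\ (M < m)%nat)) /\
  (~ N g ->
    forall M : Z, exists n : Z, n <> 0 /\ M < n /\ exists a, S a /\ zpow a n = g).

(* Main.v *)
Require Import Defs.
From Stdlib Require Import ZArith List Lia Arith Classical ClassicalEpsilon.

Section GL.
Variable G : group.
Local Open Scope nat_scope.

Lemma mulgV (x : G) : mul x (inv x) = one.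
Proof.
  rewrite <- (mul1g G (mul x (inv x))).
  rewrite <- (mulVg G (inv x)) at 1.
  rewrite <- mulA, (mulA G (inv x) x (inv x)), mulVg, mul1g. apply mulVg.
Qed.

Lemma mulg1 (x : G) : mul x one = x.
Proof. rewrite <- (mulVg G x), mulA, mulgV. apply mul1g. Qed.

Lemma inv1 : inv (one : G) = one.
Proof. rewrite <- (mul1g G (inv one)). apply mulgV. Qed.

Lemma npow_add (a : G) i j : npow a (i + j) = mul (npow a i) (npow a j).
Proof. induction i; simpl. now rewrite mul1g. now rewrite IHi, mulA. Qed.

Lemma npow_mul (a : G) d k : npow (npow a d) k = npow a (d * k).
Proof.
  induction k; simpl. now rewrite Nat.mul_0_r.
  rewrite IHk, <- npow_add. f_equal. lia.
Qed.

Lemma zpow_nat (a : G) k : zpow a (Z.of_nat k) = npow a k.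
Proof.
  destruct k. reflexivity. simpl.
  change (Pos.to_nat (Pos.of_succ_nat k)) with (Z.to_nat (Z.of_nat (S k))).
  now rewrite Nat2Z.id.
Qed.

Lemma zpow_negnat (a : G) k : zpow a (- Z.of_nat k) = inv (npow a k).
Proof.
  destruct k. simpl. now rewrite inv1. simpl.
  change (Pos.to_nat (Pos.of_succ_nat k)) with (Z.to_nat (Z.of_nat (S k))).
  now rewrite Nat2Z.id.
Qed.

Lemma zpow_split (a g : G) n : zpow a n = g ->
  (n = Z.of_nat (Z.to_nat n) /\ npow a (Z.to_nat n) = g) \/
  (n = - Z.of_nat (Z.to_nat (- n)) /\ inv (npow a (Z.to_nat (-n))) = g).
Proof.
  intros E. destruct (Z_le_gt_dec 0 n).
  - left. assert (n = Z.of_nat (Z.to_nat n)) by lia. split; auto.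
    rewrite <- zpow_nat, <- H; auto.
  - right. assert (n = - Z.of_nat (Z.to_nat (-n))) by lia. split; auto.
    rewrite <- zpow_negnat, <- H; auto.
Qed.

Lemma sub_npow (H : G -> Prop) a k : is_subgroup H -> H a -> H (npow a k).
Proof. intros [h1 [h2 h3]] Ha. induction k; simpl; auto. Qed.

Lemma least (P : nat -> Prop) n : P n -> exists k, P k /\ forall j, j < k -> ~ P j.
Proof.
  revert n. induction n as [n IH] using lt_wf_ind. intros Pn.
  destruct (classic (exists j, j < n /\ P j)) as [[j [Hj Pj]]|Hn].
  - eapply IH; eauto.
  - exists n. split; auto. intros j Hj Pj. apply Hn; eauto.
Qed.

Lemma inv_mul_cancel (x z : G) : mul (inv x) (mul x z) = z.
Proof. now rewrite mulA, mulVg, mul1g. Qed.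

Lemma pigeon (H : G -> Prop) (l : list G) (a : G) :
  is_subgroup H -> (forall x, exists r, In r l /\ H (mul (inv r) x)) ->
  exists d, 0 < d <= length l /\ H (npow a d).
Proof.
  intros Hs Hcov.
  pose (f := fun i => proj1_sig (constructive_indefinite_description _ (Hcov (npow a i)))).
  assert (Hf : forall i, In (f i) l /\ H (mul (inv (f i)) (npow a i))).
  { intro i. unfold f. destruct constructive_indefinite_description; auto. }
  assert (~ NoDup (map f (seq 0 (S (length l))))).
  { intro ND. apply NoDup_incl_length with (l' := l) in ND.
    - rewrite length_map, length_seq in ND. lia.
    - intros y Hy. apply in_map_iff in Hy. destruct Hy as [i [<- _]]. apply Hf. }
  assert (~ ForallPairs (fun x y => f x = f y -> x = y) (seq 0 (S (length l)))).
  { intro FP. apply H0. apply NoDup_map_NoDup_ForallPairs; auto. apply seq_NoDup. }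
  apply not_all_ex_not in H1. destruct H1 as [i H1].
  apply not_all_ex_not in H1. destruct H1 as [j H1].
  apply imply_to_and in H1. destruct H1 as [Hi H1].
  apply imply_to_and in H1. destruct H1 as [Hj H1].
  apply imply_to_and in H1. destruct H1 as [Hfij Hne].
  apply in_seq in Hi. apply in_seq in Hj.
  assert (key : forall i j, i < j -> f i = f j -> H (npow a (j - i))).
  { intros i0 j0 Hlt E.
    destruct (Hf i0) as [_ Hx]. destruct (Hf j0) as [_ Hy].
    rewrite <- E in Hy.
    replace j0 with (i0 + (j0 - i0)) in Hy by lia.
    rewrite npow_add, mulA in Hy.
    destruct Hs as [_ [hm hi]].
    pose proof (hm _ _ (hi _ Hx) Hy) as Z. rewrite inv_mul_cancel in Z. exact Z. }
  destruct (Nat.lt_gt_cases i j) as [[Hlt|Hlt] _].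
  - exact Hne.
  - exists (j - i). split. lia. auto.
  - exists (i - j). split. lia. auto.
Qed.

Lemma reduce (H : G -> Prop) (l : list G) (a g : G) n :
  is_subgroup H -> (forall x, exists r, In r l /\ H (mul (inv r) x)) ->
  H g -> zpow a n = g ->
  exists d q : nat, 0 < d <= length l /\ H (npow a d) /\
    Z.abs n = Z.of_nat (d * q) /\ zpow (npow a d) (Z.sgn n * Z.of_nat q) = g.
Proof.
  intros Hs Hcov Hg E.
  destruct (pigeon H l a Hs Hcov) as [d0 [Hd0 Pd0]].
  destruct (least (fun d => 0 < d /\ H (npow a d)) d0 (conj (proj1 Hd0) Pd0))
    as [d [[Hd Pd] Hmin]].
  assert (Hk : H (npow a (Z.to_nat (Z.abs n)))).
  { destruct (zpow_split _ _ _ E) as [[E1 E2]|[E1 E2]].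
    - replace (Z.to_nat (Z.abs n)) with (Z.to_nat n) by lia. now rewrite E2.
    - replace (Z.to_nat (Z.abs n)) with (Z.to_nat (-n)) by lia.
      assert (H (inv g)) by (apply Hs; auto). rewrite <- E2 in H0.
      replace (inv (inv (npow a (Z.to_nat (-n))))) with (npow a (Z.to_nat (-n))) in H0; auto.
      rewrite <- (mulg1 (inv (inv _))), <- (mulVg G (npow a (Z.to_nat (-n)))), mulA, mulVg.
      now rewrite mul1g. }
  set (k := Z.to_nat (Z.abs n)) in *.
  pose proof (Nat.div_mod k d ltac:(lia)) as Ekd.
  set (q := k / d) in *. set (r := k mod d) in *.
  assert (r = 0).
  { destruct (Nat.eq_dec r 0); auto. exfalso.
    apply (Hmin r). apply Nat.mod_upper_bound; lia. split. lia.
    rewrite Ekd, npow_add in Hk.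
    assert (Hq : H (npow a (d * q))) by (rewrite <- npow_mul; apply sub_npow; auto).
    destruct Hs as [_ [hm hi]].
    pose proof (hm _ _ (hi _ Hq) Hk) as Z.
    rewrite inv_mul_cancel in Z. exact Z. }
  assert (Hk' : Z.abs n = Z.of_nat (d * q)).
  { rewrite H0, Nat.add_0_r in Ekd. unfold k in Ekd. lia. }
  clearbody k q r.
  exists d, q. split. { destruct (le_lt_dec d d0). lia. exfalso. apply (Hmin d0); auto. split; [lia|auto]. } split; auto. split. exact Hk'.
  destruct (zpow_split _ _ _ E) as [[E1 E2]|[E1 E2]].
  - destruct (Z.eq_dec n 0). subst n. simpl. exact E.
    replace (Z.sgn n * Z.of_nat q)%Z with (Z.of_nat q) by (rewrite Z.sgn_pos by lia; lia).
    rewrite zpow_nat, npow_mul. rewrite <- E2. f_equal. lia.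
  - destruct (Z.eq_dec n 0). subst n. simpl. exact E.
    replace (Z.sgn n * Z.of_nat q)%Z with (- Z.of_nat q)%Z by (rewrite Z.sgn_neg by lia; lia).
    rewrite zpow_negnat, npow_mul. rewrite <- E2. f_equal. f_equal. lia.
Qed.

End GL.

Theorem mainTheorem12 (G : group) (H K : G -> Prop) (g : G) :
  is_normal H -> finite_index H -> is_normal K -> H g ->
  nu_infinite (fun _ => True) K g ->
  nu_infinite H (fun x => H x /\ K x) g.
Proof.
  Local Open Scope nat_scope.
  intros [HsH _] [_ [l Hcov]] [HsK _] Hg [N1 N2].
  set (m := length l).
  split.
  - intros [_ Kg] M.
    destruct (N1 Kg (M * m)) as [a [_ [[n En] Hord]]].
    destruct (reduce G H l a g n HsH Hcov Hg En) as [d [q [Hd [Pd [Hn Eg]]]]].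
    exists (npow a d). split; auto. split. eexists; exact Eg.
    destruct Hord as [Hinf | [o [[Ho [Ko Hlo]] HMo]]].
    + left. intros k Hk [_ Kk]. rewrite npow_mul in Kk.
      apply (Hinf (d * k)); auto. lia.
    + right.
      assert (P : 0 < o /\ (H (npow (npow a d) o) /\ K (npow (npow a d) o))).
      { split; auto. split. apply sub_npow; auto.
        rewrite npow_mul, Nat.mul_comm, <- npow_mul. apply sub_npow; auto. }
      destruct (least (fun k => 0 < k /\ (H (npow (npow a d) k) /\ K (npow (npow a d) k))) _ P) as [k [[Hk Pk] Hmin]].
      exists k. split.
      * split; auto. split; auto. intros j Hj Pj. apply (Hmin j); [lia|]. split; [lia|auto].
      * destruct (le_lt_dec o (d * k)).
        -- fold m in Hd. nia.
        -- exfalso. apply (Hlo (d * k)). nia. rewrite <- npow_mul. apply Pk.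
  - intros Hn M.
    assert (Kg : ~ K g) by tauto.
    destruct (N2 Kg (Z.abs M * Z.of_nat m)%Z) as [n [Hn0 [HMn [a [_ En]]]]].
    destruct (reduce G H l a g n HsH Hcov Hg En) as [d [q [Hd [Pd [Hn' Eg]]]]].
    fold m in Hd.
    exists (Z.sgn n * Z.of_nat q)%Z.
    assert (0 < n)%Z by nia.
    assert (Z.of_nat (d * q) <= Z.of_nat m * Z.of_nat q)%Z by nia.
    split. nia. split. nia. exists (npow a d). auto.
Qed.
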